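(* Let $k\geq 3$ and let $G$ be a diregular $(2,k,+3)$-digraph. Let $u,v$ be distinct vertices with exactly one common out-neighbour $u_2$, and write $N^+(u)=\{u_1,u_2\}$, $N^+(v)=\{v_1,u_2\}$. Let $w\in T(v_1)$ with $d(v_1,w)=l$, and suppose also $w\in T(u_1)$ with $d(u_1,w)=m$. Then either $m\leq l$ or $w\in N^{k-1}(u_1)$. Symmetrically, if $w\in T(u_1)\cap T(v_1)$ with $d(u_1,w)=l$ and $d(v_1,w)=m$, then either $m\leq l$ or $w\in N^{k-1}(v_1)$.
   Context: A digraph is $k$-geodetic if for every ordered pair of vertices $x,y$ there is at most one directed path from $x$ to $y$ of length at most $k$ (the trivial path counts). A diregular $(2,k,+3)$-digraph is a $k$-geodetic digraph of order $1+2+\dots+2^k+3$ in which every vertex has in- and out-degree $2$. $N^+(x)$ is the set of out-neighbours of $x$; $N^l(x)$ is the set of end-vertices of directed paths of length $l$ starting at $x$. $d(x,y)$ is the directed distance. $T(x)=\{y: d(x,y)\leq k-1\}$. *)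

(* Defs.v *)
From mathcomp Require Import all_boot.
Set Implicit Arguments. Unset Strict Implicit. Unset Printing Implicit Defensive.

(* A digraph is a finite vertex type V with arc relation e : rel V.
   A directed walk of length n from x is a sequence p of n vertices with
   path e x p; its end-vertex is last x p. *)

(* k-geodetic: for every ordered pair x,y (not necessarily distinct) there is
   at most one directed walk from x to y of length at most k (trivial walk counts). *)
Definition k_geodetic (V : finType) (e : rel V) (k : nat) : Prop :=
  forall (x : V) (p q : seq V),
    path e x p -> path e x q -> size p <= k -> size q <= k ->
    last x p = last x q -> p = q.

Definition diregular2 (V : finType) (e : rel V) : Prop :=
  forall x : V, #|[set y | e x y]| = 2 /\ #|[set y | e y x]| = 2.

Definition diregular_2k3 (V : finType) (e : rel V) (k : nat) : Prop :=
  [/\ k_geodetic e k, diregular2 e & #|V| = (\sum_(i < k.+1) 2 ^ i) + 3].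

Definition inN (V : finType) (e : rel V) (x : V) (l : nat) (y : V) : Prop :=
  exists p : seq V, [/\ size p = l, path e x p & last x p = y].

Definition dist_is (V : finType) (e : rel V) (x y : V) (l : nat) : Prop :=
  inN e x l y /\ forall m, m < l -> ~ inN e x m y.

Definition inT (V : finType) (e : rel V) (k : nat) (x y : V) : Prop :=
  exists l, l <= k.-1 /\ dist_is e x y l.

(* Main.v *)
Require Import Defs.
From mathcomp Require Import all_boot zify.
Set Implicit Arguments. Unset Strict Implicit. Unset Printing Implicit Defensive.

Lemma sum2 n : \sum_(i < n) 2 ^ i + 1 = 2 ^ n.
Proof. elim: n => [|n IH]; first by rewrite big_ord0. rewrite big_ord_recr /= expnS -IH.
set s := \sum_(_ < _) _. lia. Qed.

Section Aux.
Variables (V : finType) (e : rel V).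

Fixpoint Ball (x : V) (d : nat) : {set V} :=
  match d with 0 => [set x] | d'.+1 => x |: \bigcup_(y | e x y) Ball y d' end.

Definition reach x d y := exists p, [/\ size p <= d, path e x p & last x p = y].

Lemma BallP d x y : y \in Ball x d <-> reach x d y.
Proof.
elim: d x => [|d IH] x /=.
  split => [h|[[|a p] [sp _ <-]]].
    by exists [::]; split => //; move/set1P: h.
  exact: set11. by [].
split.
  case/setU1P => [->|/bigcupP [z exz /IH [p [sp pp lp]]]]; first by exists [::].
  by exists (z :: p); rewrite /= exz pp lp; split.
case => [[|z p] [sp /= pp lp]]; first by rewrite lp; apply/setU1P; left.
move/andP: pp => [exz pp]; apply/setU1P; right; apply/bigcupP; exists z => //.
by apply/IH; exists p; split.
Qed.

Lemma reach_mono x d d' y : d <= d' -> reach x d y -> reach x d' y.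
Proof. by move=> h [p [sp pp lp]]; exists p; split => //; apply: leq_trans h. Qed.

Variable k : nat.
Hypothesis Hgeo : k_geodetic e k.
Hypothesis Hdeg : diregular2 e.

Lemma geo_nil x p : path e x p -> size p <= k -> last x p = x -> p = [::].
Proof. by move=> pp sp lp; apply: (Hgeo pp (p := p) (q := [::])). Qed.

Lemma two_out x : exists y1 y2, y1 != y2 /\ (forall y, e x y = (y == y1) || (y == y2)).
Proof.
have [h _] := Hdeg x.
have /cards2P [y1 [y2 [ne hs]]] : #|[set y | e x y]| == 2 by rewrite h.
exists y1, y2; split => // y.
have := f_equal (fun A : {set V} => y \in A) hs; by rewrite /= !inE.
Qed.

Lemma Ball_card d x : d <= k -> #|Ball x d| + 1 = 2 ^ d.+1.
Proof.
elim: d x => [|d IH] x hd /=; first by rewrite cards1.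
have [y1 [y2 [ne hy]]] := two_out x.
have -> : \bigcup_(y | e x y) Ball y d = Ball y1 d :|: Ball y2 d.
  apply/setP => z; rewrite inE; apply/bigcupP/orP.
    by case=> y; rewrite hy => /orP [] /eqP -> h; [left|right].
  by case=> h; [exists y1|exists y2] => //; rewrite hy eqxx ?orbT.
have hI : Ball y1 d :&: Ball y2 d = set0.
  apply/setP => z; rewrite !inE; apply/negP => /andP [/BallP [p [sp pp lp]] /BallP [q [sq pq lq]]].
  have := @Hgeo x (y1 :: p) (y2 :: q).
  rewrite /= pp pq !hy !eqxx ?orbT /= lp lq => /(_ isT isT).
  have h1 : (size p).+1 <= k by lia.
  have h2 : (size q).+1 <= k by lia.
  by move=> /(_ h1 h2 erefl) [] /eqP; rewrite (negbTE ne).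
rewrite cardsU1 cardsU hI cards0 subn0.
have hx : x \notin Ball y1 d :|: Ball y2 d.
  rewrite inE negb_or; apply/andP; split; apply/negP => /BallP [p [sp pp lp]].
    have := @geo_nil x (y1 :: p); rewrite /= hy eqxx pp lp /=.
    by move=> /(_ isT ltac:(lia) erefl).
  have := @geo_nil x (y2 :: p); rewrite /= hy eqxx orbT pp lp /=.
  by move=> /(_ isT ltac:(lia) erefl).
rewrite hx.
have := IH y1 ltac:(lia); have := IH y2 ltac:(lia).
rewrite !expnS; lia.
Qed.

Lemma dist_uniq x y a b : dist_is e x y a -> dist_is e x y b -> a = b.
Proof.
move=> [ha na] [hb nb]; apply/eqP; rewrite eqn_leq; apply/andP; split;
  rewrite leqNgt; apply/negP => h; [exact: na _ h hb | exact: nb _ h ha].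
Qed.

Lemma ne_out a b c : (forall x, e a x <-> x = b \/ x = c) -> b != c.
Proof.
move=> h; have [hd _] := Hdeg a.
have hs : [set y | e a y] = [set b; c].
  apply/setP => y; rewrite !inE; apply/idP/orP => [/(h y) [] ->|[] /eqP ->];
    rewrite ?eqxx ?orbT //; [by left|by right| |]; apply (proj2 (h _)); by [left|right].
move: hd; rewrite hs cards2; by case: (b != c).
Qed.

Definition dif (x y : V) := x != y.

Hypothesis Hk : 3 <= k.
Hypothesis Hcard : #|V| = (\sum_(i < k.+1) 2 ^ i) + 3.

Ltac clean := repeat match goal with
 | H : is_true ?b |- _ => lazymatch b with leq _ _ => fail | ~~ (_ == _) => fail | _ == _ => fail | _ => clear H end
 | H : @eq ?T _ _ |- _ => lazymatch T with nat => fail | _ => clear H end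
 | H : forall _, _ |- _ => clear H
 | H : dist_is _ _ _ _ |- _ => clear H
 | H : inT _ _ _ _ |- _ => clear H
 | H : reach _ _ _ |- _ => clear H
 end.
Ltac nlia := clean; lia.

Lemma L u v u1 u2 v1 : u != v -> (forall x, e u x <-> x = u1 \/ x = u2) ->
  (forall x, e v x <-> x = v1 \/ x = u2) -> u1 != v1 ->
  forall w l m, inT e k v1 w -> dist_is e v1 w l -> inT e k u1 w -> dist_is e u1 w m ->
  m <= l \/ inN e u1 k.-1 w.
Proof.
move=> neuv hu hv ne1 w l m [l' [hl' dl']] dl [m' [hm' dm']] dm.
have el := dist_uniq dl' dl; have em := dist_uniq dm' dm; subst l' m'.
case: (eqVneq m k.-1) => [Em|nm]; first by right; subst m; case: dm.
case: (leqP m l) => [|lm]; first by left.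
exfalso.
have {neuv} neuv : dif u v := neuv.
have {ne1} ne1 : dif u1 v1 := ne1.
have [[pw [spw ppw lpw]] _] := dl.
have [[qw [sqw pqw lqw]] _] := dm.
have ne12 : dif u1 u2 := ne_out hu. have nev : dif v1 u2 := ne_out hv.
have eu1 : e u u1 := proj2 (hu u1) (or_introl erefl).
have eu2 : e u u2 := proj2 (hu u2) (or_intror erefl).
have ev1 : e v v1 := proj2 (hv v1) (or_introl erefl).
have ev2 : e v u2 := proj2 (hv u2) (or_intror erefl).
set j := k - m.
have hj : 2 <= j by nlia.
have hlj : l + j <= k.-1 by nlia.
have hmj : m + j = k by nlia.
set Z := Ball w j :\: Ball w j.-1.
have Zw : forall z, z \in Z -> exists pz, [/\ size pz = j, path e w pz & last w pz = z].
  move=> z; rewrite inE => /andP [nz /BallP [pz [spz ppz lpz]]]; exists pz; split => //.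
  have : j <= size pz.
    rewrite leqNgt; apply/negP => h; move/negP: nz; apply; apply/BallP.
    by exists pz; split => //; nlia.
  nlia.
have Zcard : #|Z| = 2 ^ j.
  rewrite cardsD (setIidPr _); last first.
    by apply/subsetP => z /BallP h; apply/BallP; apply: reach_mono h; nlia.
  have h1 := Ball_card w (_ : j <= k).
  have h2 := Ball_card w (_ : j.-1 <= k).
  rewrite prednK in h2; last by nlia.
  have := h1 ltac:(nlia); have := h2 ltac:(nlia); rewrite expnS; nlia.
have F1 : forall z, z \in Z -> ~ reach u1 k.-1 z.
  move=> z /Zw [pz [spz ppz lpz]] [p [sp pp lp]].
  have := @Hgeo u1 p (qw ++ pz) pp.
  rewrite cat_path pqw lqw ppz last_cat lqw lpz size_cat sqw spz.
  move=> /(_ isT ltac:(nlia) ltac:(nlia) lp) ep.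
  by move: sp; rewrite ep size_cat sqw spz; nlia.
have F2 : forall z, z \in Z -> ~ reach u2 k.-1 z.
  move=> z /Zw [pz [spz ppz lpz]] [p [sp pp lp]].
  have := @Hgeo v (v1 :: pw ++ pz) (u2 :: p).
  rewrite /= ev1 ev2 cat_path ppw lpw ppz pp last_cat lpw lpz lp size_cat spw spz /=.
  move=> /(_ isT isT ltac:(nlia) ltac:(nlia) erefl) [] /eqP.
  by rewrite (negbTE (nev : v1 != u2)).
have hV : #|V| = 2 ^ k.+1 + 2 by have := sum2 k.+1; nlia.
have hBu := Ball_card u (leqnn k).
have cBu := cardsC (Ball u k).
have Zsub : Z \subset u |: ~: Ball u k.
  apply/subsetP => z zZ; rewrite !inE; case: (eqVneq z u) => //= nzu.
  apply/negP => /BallP [[|y p] [sp pp lp]].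
    by move: nzu; rewrite -lp eqxx.
  move/andP: pp => [euy pp]; move: sp => /= sp; case/hu: euy => ey; subst y.
    by apply: (F1 _ zZ); exists p; split => //; nlia.
  by apply: (F2 _ zZ); exists p; split => //; nlia.
have ZE : Z = u |: ~: Ball u k.
  apply/eqP; rewrite eqEcard Zsub /= cardsU1 Zcard.
  have : 2 ^ 2 <= 2 ^ j := leq_pexp2l (isT : 0 < 2) hj.
  case: (u \notin ~: Ball u k) => /=; nlia.
have hv1Z : v1 \notin Z.
  apply/negP => /Zw [pz [spz ppz lpz]].
  have := @geo_nil v1 (pw ++ pz).
  rewrite cat_path ppw lpw ppz size_cat spw spz last_cat lpw lpz.
  move=> /(_ isT ltac:(nlia) erefl) /(congr1 size); rewrite size_cat spz /=; nlia.
have : v1 \in Ball u k.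
  apply/negPn/negP => hn; move/negP: hv1Z; apply; rewrite ZE !inE hn orbT //.
move=> /BallP [[|y p] [sp pp lp]].
  move: lp => /= lp.
  have := @Hgeo v [:: v1; u2] [:: u2].
  rewrite /= ev1 -lp eu2 ev2 /=.
  by move=> /(_ isT isT ltac:(nlia) ltac:(nlia) erefl).
move/andP: pp => [euy pp]; move: lp sp => /= lp sp.
case/hu: euy => ey; subst y; last first.
  have := @Hgeo v [:: v1] (u2 :: p).
  rewrite /= ev1 ev2 lp /=.
  move=> /(_ isT pp ltac:(nlia) ltac:(nlia) erefl) [] /eqP.
  by rewrite (negbTE (nev : v1 != u2)).
have hvB : v \in Ball u1 k.-1.
  apply/negPn/negP => nv.
  set S := v |: (Ball u1 k.-1 :|: Z).
  have hS : S \subset ~: Ball u2 k.-1.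
    apply/subsetP => z; rewrite in_setC => /setU1P [-> | /setUP [zb | zZ]]; apply/negP => /BallP h.
    - case: h => [q [sq pq lq]].
      have := @geo_nil v (u2 :: q); rewrite /= ev2 pq lq.
      by move=> /(_ isT ltac:(nlia) erefl).
    - case: h => [q [sq pq lq]]; case/BallP: zb => [r [sr pr lr]].
      have := @Hgeo u (u1 :: r) (u2 :: q); rewrite /= eu1 eu2 pq pr lq lr.
      move=> /(_ isT isT ltac:(nlia) ltac:(nlia) erefl) [] /eqP.
      by rewrite (negbTE (ne12 : u1 != u2)).
    - exact: (F2 _ zZ h).
  have vZ : v \notin Z.
    apply/negP => /Zw [pz [spz ppz lpz]].
    have := @geo_nil v (v1 :: pw ++ pz).
    rewrite /= ev1 cat_path ppw lpw ppz size_cat spw spz last_cat lpw lpz.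
    by move=> /(_ isT ltac:(nlia) erefl).
  have hI : Ball u1 k.-1 :&: Z = set0.
    apply/setP => z; rewrite in_setI in_set0; apply/negP => /andP [/BallP h zZ].
    exact: (F1 _ zZ h).
  have cS : #|S| = 1 + #|Ball u1 k.-1| + #|Z|.
    rewrite cardsU1 cardsU hI cards0 subn0 in_setU (negbTE nv) (negbTE vZ) /=; nlia.
  have := subset_leq_card hS.
  have := cardsC (Ball u2 k.-1).
  have h1 := Ball_card u1 (_ : k.-1 <= k).
  have h2 := Ball_card u2 (_ : k.-1 <= k).
  have := h1 ltac:(nlia); have := h2 ltac:(nlia).
  have : 2 ^ 2 <= 2 ^ j := leq_pexp2l (isT : 0 < 2) hj.
  rewrite prednK; last by nlia.
  rewrite cS Zcard hV (expnS 2 k); nlia.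
case/BallP: hvB => [pv [spv ppv lpv]].
case: (leqP (size pv) k.-2) => hs.
  have := @Hgeo u (u1 :: pv ++ [:: u2]) [:: u2].
  rewrite /= eu1 cat_path ppv lpv /= ev2 eu2 size_cat /=.
  move=> /(_ isT isT ltac:(nlia) ltac:(nlia)).
  rewrite last_cat lpv /= => /(_ erefl) [] /eqP.
  by rewrite (negbTE (ne12 : u1 != u2)).
have := @Hgeo u1 (pv ++ [:: v1]) p.
rewrite cat_path ppv lpv /= ev1 size_cat /= last_cat lpv /= lp.
move=> /(_ isT pp ltac:(nlia) ltac:(nlia) erefl) /(congr1 size).
rewrite size_cat /=; nlia.
Qed.
End Aux.

Unset Implicit Arguments.

Theorem lemma4 (V : finType) (e : rel V) (k : nat) (u v u1 u2 v1 : V) :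
  3 <= k -> diregular_2k3 e k ->
  u != v ->
  (forall x, e u x <-> x = u1 \/ x = u2) ->
  (forall x, e v x <-> x = v1 \/ x = u2) ->
  u1 != v1 ->
  (forall (w : V) (l m : nat),
      inT e k v1 w -> dist_is e v1 w l ->
      inT e k u1 w -> dist_is e u1 w m ->
      m <= l \/ inN e u1 k.-1 w) /\
  (forall (w : V) (l m : nat),
      inT e k u1 w -> dist_is e u1 w l ->
      inT e k v1 w -> dist_is e v1 w m ->
      m <= l \/ inN e v1 k.-1 w).
Proof.
move=> Hk [Hgeo Hdeg Hcard] neuv hu hv ne1; split.
  exact: (@L V e k Hgeo Hdeg Hk Hcard u v u1 u2 v1 neuv hu hv ne1).
apply: (@L V e k Hgeo Hdeg Hk Hcard v u v1 u2 u1 _ hv hu); by rewrite eq_sym.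
Qed.
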